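(* Let $1\le\ell_1\le\dots\le\ell_r\le n$, $K\in B(\varpi_{\ell_r})\otimes\cdots\otimes B(\varpi_{\ell_1})$, $\ell\in[n]$ with $\ell\ge\ell_r$, and $j\in[n-1]$. Then $$tT_j^{-1}\sum_{C\in B(\varpi_\ell)}X^C\Psi_{C\otimes K}=\sum_{D\in B(\varpi_\ell)}X^Df_{D,K},\qquad T_j\sum_{C\in B(\varpi_\ell)}X^C\Psi_{C\otimes K}=\sum_{D\in B(\varpi_\ell)}X^Dg_{D,K},$$ where $$f_{D,K}=\begin{cases}tT_j^{-1}\Psi_{s_jD\otimes K},& s_jD\le D,\\ T_j\Psi_{s_jD\otimes K}+(1-t)\Psi_{D\otimes K},& s_jD\ge D,\end{cases}\qquad g_{D,K}=\begin{cases}tT_j^{-1}\Psi_{s_jD\otimes K}-(1-t)\Psi_{D\otimes K},& s_jD\le D,\\ T_j\Psi_{s_jD\otimes K},& s_jD\ge D\end{cases}$$ (the two cases agree when $s_jD=D$).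
   Context: Fix $n\ge1$, $[n]=\{1,\dots,n\}$. $S_n$ with simple transpositions $s_i$ and length $\ell(\cdot)$ acts on $\mathbb Z^n$ by permuting coordinates; $\varpi_k=\varepsilon_1+\dots+\varepsilon_k$; $S_{n,\lambda}$ is the stabilizer of $\lambda$. The affine Hecke algebra $H$ is the $\mathbb Z[t^{\pm1}]$-algebra with generators $T_1,\dots,T_{n-1},X_1^{\pm1},\dots,X_n^{\pm1}$ and relations $T_i^2=(t-1)T_i+t$, $T_iT_{i+1}T_i=T_{i+1}T_iT_{i+1}$, $T_iT_j=T_jT_i$ ($|i-j|>1$), $X_iX_j=X_jX_i$, $T_iX_iT_i=tX_{i+1}$, $T_iX_j=X_jT_i$ ($j\notin\{i,i+1\}$); $tT_i^{-1}=T_i+1-t$. $T_w$ via reduced words; $H_n=\mathrm{span}\{T_w\}$, $H_{n,\lambda}=\mathrm{span}\{T_w:w\in S_{n,\lambda}\}$, $\mathbf 1_\lambda=\sum_{w\in S_{n,\lambda}}T_w$. Columns: $B(\varpi_\ell)$ is the set of $C=(c_1<\dots<c_\ell)\subseteq[n]$; order $E\le F$ iff $e_i\le f_i$ for all $i$; $s_jC$ is the column whose underlying set is the image of $C$ under $(j,j+1)$; $X^C=\prod_{c\in C}X_c$; $u_C\in S_n$ sends $k\mapsto c_k$ ($k\le\ell$) and $\ell+1,\dots,n$ increasingly onto $[n]\setminus C$. $B(\varpi_{\ell_r})\otimes\cdots\otimes B(\varpi_{\ell_1})$ is the set of sequences $C_r\otimes\cdots\otimes C_1$, $C_i\in B(\varpi_{\ell_i})$;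 $C\otimes K$ prepends a column. $\Psi$: each $h\in H_n$ is uniquely $\sum_{F\in B(\varpi_\ell)}T_{u_F}h_F$, $h_F\in H_{n,\varpi_\ell}$. $\Psi_C=t^{\ell(u_C)}(T_{u_C^{-1}})^{-1}\mathbf 1_{\varpi_\ell}$ for $C\in B(\varpi_\ell)$; for $T=C\otimes S$ ($C\in B(\varpi_\ell)$, $S$ with columns of length $\le\ell$), write $\Psi_S=\sum_ET_{u_E}h_{E,S}$ ($h_{E,S}\in H_{n,\varpi_\ell}$) and set $\Psi_T=t^{\ell(u_C)}(T_{u_C^{-1}})^{-1}h_{C,S}$. *)

(* Defs.v *)
(* Conventions: 0-based indices. The paper's X_i (i in [n]) is
   XA (i-1); the paper's T_j / s_j (j in [n-1]) is TA (j-1) / sp (j-1), which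
   swaps positions j-1 and j of 'I_n. *)
From HB Require Import structures.
From mathcomp Require Import all_boot all_order all_fingroup all_algebra.
Set Implicit Arguments. Unset Strict Implicit. Unset Printing Implicit Defensive.
Import Order.TTheory GRing.Theory.
Local Open Scope ring_scope.

Section Hecke.
Variable n : nat.

(* u o v as functions:  (u o v) x = u (v x). *)
Definition pcomp (u v : 'S_n) : 'S_n := (v * u)%g.

Definition perm_of (f : nat -> nat) : 'S_n :=
  odflt 1%g [pick w : 'S_n | [forall x : 'I_n, val (w x) == f (val x)]].

Definition swapnat (i k : nat) : nat :=
  if k == i then i.+1 else if k == i.+1 then i else k.

Definition sp (i : nat) : 'S_n := perm_of (swapnat i).

Definition len (w : 'S_n) : nat :=
  #|[set p : 'I_n * 'I_n | (p.1 < p.2)%N && (w p.2 < w p.1)%N]|.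

(* a reduced word [i1; ...; ik] with w = s_i1 o ... o s_ik *)
Fixpoint rword_rec (fuel : nat) (w : 'S_n) : seq nat :=
  match fuel with
  | 0 => [::]
  | f.+1 =>
    match [pick p : 'I_n * 'I_n | (val p.2 == (val p.1).+1) && (w p.2 < w p.1)%N] with
    | Some p => rcons (rword_rec f (pcomp w (sp (val p.1)))) (val p.1)
    | None => [::]
    end
  end.
Definition rword (w : 'S_n) : seq nat := rword_rec (len w) w.

Definition colset (C : {set 'I_n}) (l : nat) : bool := #|C| == l.
Definition leC (E F : {set 'I_n}) : bool :=
  all2 (fun e f : 'I_n => (e <= f)%N) (enum E) (enum F).
Definition sC (j : nat) (C : {set 'I_n}) : {set 'I_n} := (sp j) @: C.
(* u_C : k |-> c_k (k < |C|), remaining positions increasingly onto the complement *)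
Definition uC (C : {set 'I_n}) : 'S_n :=
  perm_of (fun k => nth 0%N (map val (enum C ++ enum (~: C))) k).
Definition stab (l : nat) (w : 'S_n) : bool :=
  [forall x : 'I_n, (x < l)%N == (w x < l)%N].

Variable R : comUnitRingType.
Variable t : R.

(* finite Hecke algebra H_n, elements written in the basis T_w: h = sum_w h w T_w *)
Local Notation HF := {ffun 'S_n -> R^o}.

(* coefficient of T_v in T_i T_w *)
Definition coefTi (i : nat) (w v : 'S_n) : R :=
  let sw := pcomp (sp i) w in
  if (len w < len sw)%N then (v == sw)%:R
  else (t - 1) * (v == w)%:R + t * (v == sw)%:R.

(* left multiplication by T_i, T_i^{-1} = t^{-1}(T_i + 1 - t) *)
Definition TiL (i : nat) (h : HF) : HF :=
  [ffun v => \sum_(w : 'S_n) h w * coefTi i w v].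
Definition TinvL (i : nat) (h : HF) : HF := t^-1 *: (TiL i h + (1 - t) *: h).

(* left multiplication by (T_w)^{-1} *)
Definition TinvW (w : 'S_n) (h : HF) : HF :=
  foldr TinvL h (rev (rword w)).

Definition oneL (l : nat) : HF := [ffun w => (stab l w)%:R].

(* h_E for h = sum_F T_{u_F} h_F, with h_F in H_{n,varpi_l}, l = |E| *)
Definition hproj (E : {set 'I_n}) (h : HF) : HF :=
  [ffun v => if stab #|E| v then h (pcomp (uC E) v) else 0].

(* Psi_T for T = C_r (x) ... (x) C_1, written as the list [:: C_r; ...; C_1] *)
Fixpoint Psi (T : seq {set 'I_n}) : HF :=
  match T with
  | [::] => 0
  | C :: Sq =>
    if Sq is [::] then t ^+ len (uC C) *: TinvW (uC C)^-1%g (oneL #|C|)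
    else t ^+ len (uC C) *: TinvW (uC C)^-1%g (hproj C (Psi Sq))
  end.

(* an R-algebra A with elements satisfying the defining relations of H
   (0-based: TA i for i.+1 < n, XA i and XAinv i for i < n) *)
Definition hecke_rels (A : algType R) (TA XA XAinv : nat -> A) : Prop :=
  (forall i, (i.+1 < n)%N -> TA i * TA i = (t - 1) *: TA i + t%:A) /\
     (
      forall i, (i.+2 < n)%N -> TA i * TA i.+1 * TA i = TA i.+1 * TA i * TA i.+1) /\
     (
      forall i k, (i.+1 < n)%N -> (k.+1 < n)%N -> (i.+1 < k)%N || (k.+1 < i)%N ->
                  TA i * TA k = TA k * TA i) /\
     (
      forall i k, (i < n)%N -> (k < n)%N -> XA i * XA k = XA k * XA i) /\
     (
      forall i, (i < n)%N -> XA i * XAinv i = 1 /\ XAinv i * XA i = 1) /\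
     (
      forall i, (i.+1 < n)%N -> TA i * XA i * TA i = t *: XA i.+1) /\
     (
      forall i k, (i.+1 < n)%N -> (k < n)%N -> k != i -> k != i.+1 ->
                  TA i * XA k = XA k * TA i).

Variable A : algType R.
Variable TA XA : nat -> A.

(* image in A of an element of H_n: T_w |-> T_{i1} ... T_{ik} *)
Definition phiA (h : HF) : A := \sum_(w : 'S_n) h w *: \prod_(i <- rword w) TA i.

Definition XC (C : {set 'I_n}) : A := \prod_(c in C) XA c.

(* images of f_{D,K}, g_{D,K}; t T_j^{-1} = T_j + 1 - t *)
Definition fDK (j : nat) (D : {set 'I_n}) (K : seq {set 'I_n}) : A :=
  if leC (sC j D) D then (TA j + (1 - t)%:A) * phiA (Psi (sC j D :: K))
  else TA j * phiA (Psi (sC j D :: K)) + (1 - t) *: phiA (Psi (D :: K)).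
Definition gDK (j : nat) (D : {set 'I_n}) (K : seq {set 'I_n}) : A :=
  if leC (sC j D) D then
    (TA j + (1 - t)%:A) * phiA (Psi (sC j D :: K)) - (1 - t) *: phiA (Psi (D :: K))
  else TA j * phiA (Psi (sC j D :: K)).

End Hecke.

(* Main.v *)
Require Import Defs.
From HB Require Import structures.
From mathcomp Require Import all_boot all_order all_fingroup all_algebra.
From mathcomp Require Import zify.
Import GRing.Theory.
Local Open Scope ring_scope.
Set Implicit Arguments. Unset Strict Implicit.

Lemma spE (n j : nat) (x : 'I_n) : (j.+1 < n)%N -> val (sp n j x) = swapnat j (val x).
Proof.
move=> hj; rewrite /sp /Defs.perm_of.
case: (pickP (fun w : 'S_n => [forall x : 'I_n, val (w x) == swapnat j (val x)])) => [w /forallP H | H] /=.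
  by move: (H x) => /eqP.
have hj0 : (j < n)%N by apply: ltnW.
have := H (tperm (Ordinal hj0) (Ordinal hj)).
move/negbT/forallPn => [y] /negP hy; exfalso; apply: hy.
rewrite /swapnat.
case: (eqVneq y (Ordinal hj0)) => [->|ne1] /=; first by rewrite tpermL eqxx.
have nv1 : val y != j by apply: contra ne1 => /eqP e; apply/eqP/val_inj.
case: (eqVneq y (Ordinal hj)) => [->|ne2] /=.
  by rewrite tpermR (gtn_eqF (ltnSn j)) eqxx.
have nv2 : val y != j.+1 by apply: contra ne2 => /eqP e; apply/eqP/val_inj.
by rewrite tpermD 1?eq_sym // (negbTE nv1) (negbTE nv2) eqxx.
Qed.


Lemma swapnatK j k : swapnat j (swapnat j k) = k.
Proof. rewrite /swapnat; do ! case: eqP; lia. Qed.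

Lemma sp_inv (n j : nat) (hj : (j.+1 < n)%N) (x : 'I_n) : sp n j (sp n j x) = x.
Proof. by apply: val_inj; rewrite !spE // swapnatK. Qed.

Lemma mem_sC (n j : nat) (hj : (j.+1 < n)%N) (D : {set 'I_n}) x :
  (x \in sC j D) = (sp n j x \in D).
Proof. by rewrite /sC -{1}(sp_inv hj x) mem_imset //; apply: perm_inj. Qed.

Lemma sC_inv (n j : nat) (hj : (j.+1 < n)%N) (D : {set 'I_n}) : sC j (sC j D) = D.
Proof. by apply/setP => x; rewrite !mem_sC // sp_inv. Qed.

Lemma card_sC (n j : nat) (D : {set 'I_n}) : #|sC j D| = #|D|.
Proof. by rewrite /sC card_imset //; apply: perm_inj. Qed.

Lemma sC_fix (n j : nat) (hj : (j.+1 < n)%N) (D : {set 'I_n}) :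
  (Ordinal (ltnW hj) \in D) = (Ordinal hj \in D) -> sC j D = D.
Proof.
move=> e; apply/setP => x; rewrite mem_sC //.
case: (eqVneq x (Ordinal (ltnW hj))) => [->|n1].
  have -> : sp n j (Ordinal (ltnW hj)) = Ordinal hj.
    by apply: val_inj; rewrite spE //= /swapnat eqxx.
  by rewrite e.
case: (eqVneq x (Ordinal hj)) => [->|n2].
  have -> : sp n j (Ordinal hj) = Ordinal (ltnW hj).
    by apply: val_inj; rewrite spE //= /swapnat eqxx gtn_eqF.
  by rewrite e.
have -> // : sp n j x = x.
apply: val_inj; rewrite spE // /swapnat.
have /negbTE-> : val x != j by apply: contra n1 => /eqP e1; apply/eqP/val_inj.
by have /negbTE-> : val x != j.+1 by apply: contra n2 => /eqP e1; apply/eqP/val_inj.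
Qed.

Definition ltO (n : nat) (a b : 'I_n) : bool := (val a < val b)%N.

Lemma sorted_enumO (n : nat) (D : {set 'I_n}) : sorted (@ltO n) (enum D).
Proof.
have : sorted ltn (map val (enum D)).
  rewrite -[enum _](eq_filter (mem_enum _)).
  rewrite -(eq_filter (mem_map val_inj _)) -filter_map.
  by rewrite (sorted_filter ltn_trans) // unlock val_ord_enum iota_ltn_sorted.
by rewrite sorted_map.
Qed.

Lemma all2_refl (T : Type) (r : T -> T -> bool) (s : seq T) :
  (forall x, r x x) -> all2 r s s.
Proof. by move=> h; elim: s => //= a s ->; rewrite h. Qed.

Lemma all2_mapl (T : Type) (r : T -> T -> bool) f (s : seq T) :
  all2 r (map f s) s = all (fun x => r (f x) x) s.
Proof. by elim: s => //= a s ->. Qed.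

Lemma leC_sC (n j : nat) (hj : (j.+1 < n)%N) (D : {set 'I_n}) :
  leC (sC j D) D = ~~ ((Ordinal (ltnW hj) \in D) && (Ordinal hj \notin D)).
Proof.
case: (boolP ((Ordinal (ltnW hj) \in D) == (Ordinal hj \in D))) => [/eqP e|ne].
  rewrite sC_fix // /leC all2_refl; last by move=> x; apply: leqnn.
  by rewrite e; case: (_ \in D).
have Em : enum (sC j D) = map (sp n j) (enum D).
  apply: (@irr_sorted_eq _ (@ltO n)).
  - by move=> a b c; rewrite /ltO; apply: ltn_trans.
  - by move=> a; rewrite /ltO ltnn.
  - exact: sorted_enumO.
  - apply: (@homo_sorted_in _ _ (fun x => x \in D)); last exact: sorted_enumO.
      move=> a b aD bD; rewrite /ltO !spE // /swapnat.
      have hx : ~~ ((val a == j) && (val b == j.+1)).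
        apply/negP => /andP [/eqP ea /eqP eb]; move: ne.
        have ea' : a = Ordinal (ltnW hj) by apply: val_inj.
        have eb' : b = Ordinal hj by apply: val_inj.
        by rewrite -ea' -eb' aD bD.
      move: hx; move: (val a) (val b) => x y; do ! case: eqP; lia.
    by apply/allP => x; rewrite mem_enum.
  - move=> x; rewrite mem_enum mem_sC // -{2}(sp_inv hj x) mem_map ?mem_enum //.
    exact: perm_inj.
rewrite /leC Em all2_mapl.
case: (boolP (Ordinal (ltnW hj) \in D)) => h1 /=.
  have h2 : Ordinal hj \notin D by move: ne; rewrite h1; case: (_ \in D).
  rewrite h2 /=; apply/negP => /allP /(_ (Ordinal (ltnW hj))).
  by rewrite mem_enum h1 spE //= /swapnat eqxx ltnn => /(_ isT).
apply/allP => x; rewrite mem_enum => xD; rewrite spE // /swapnat.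
have : val x != j by apply: contraNneq h1 => e; rewrite -(_ : x = Ordinal (ltnW hj)) //; apply: val_inj.
case: eqP => // _ _; case: eqP => // ->; lia.
Qed.


Lemma scale_cancel (R : comUnitRingType) (A : algType R) (t : R) (u v : A) :
  t \is a GRing.unit -> t *: u = t *: v -> u = v.
Proof. by move=> tu e; rewrite -(scale1r u) -(mulVr tu) -scalerA e scalerA mulVr // scale1r. Qed.

Lemma TU_inv (n : nat) (R : comUnitRingType) (t : R) (A : algType R)
    (TA XA XAinv : nat -> A) j :
  hecke_rels n t TA XA XAinv -> (j.+1 < n)%N ->
  TA j * (TA j + (1 - t)%:A) = t%:A /\ (TA j + (1 - t)%:A) * TA j = t%:A.
Proof.
move=> [Hq _] hj.
have e1 : TA j * TA j + (1 - t) *: TA j = t%:A.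
  by rewrite Hq // addrAC -scalerDl addrA subrK subrr scale0r add0r.
split.
  by rewrite mulrDr mulr_algr e1.
by rewrite mulrDl mulr_algl e1.
Qed.

Lemma rel1 (n : nat) (R : comUnitRingType) (t : R) (A : algType R)
    (TA XA XAinv : nat -> A) j :
  t \is a GRing.unit -> hecke_rels n t TA XA XAinv -> (j.+1 < n)%N ->
  TA j * XA j = XA j.+1 * TA j + (1 - t) *: XA j.+1.
Proof.
move=> tu H hj; have [e1 e2] := TU_inv H hj.
have [_ [_ [_ [_ [_ [Hm _]]]]]] := H.
apply: (scale_cancel tu).
have : TA j * XA j * TA j * (TA j + (1 - t)%:A) = t *: XA j.+1 * (TA j + (1 - t)%:A).
  by rewrite Hm.
rewrite -mulrA e1 mulr_algr -scalerAl => ->.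
by rewrite mulrDr mulr_algr.
Qed.

Lemma rel2 (n : nat) (R : comUnitRingType) (t : R) (A : algType R)
    (TA XA XAinv : nat -> A) j :
  t \is a GRing.unit -> hecke_rels n t TA XA XAinv -> (j.+1 < n)%N ->
  TA j * XA j.+1 = XA j * TA j - (1 - t) *: XA j.+1.
Proof.
move=> tu H hj; have [e1 e2] := TU_inv H hj.
have [_ [_ [_ [_ [_ [Hm _]]]]]] := H.
suff : t *: (XA j * TA j) = t *: (TA j * XA j.+1 + (1 - t) *: XA j.+1).
  by move/(scale_cancel tu) ->; rewrite addrK.
have : (TA j + (1 - t)%:A) * (TA j * XA j * TA j) = (TA j + (1 - t)%:A) * (t *: XA j.+1).
  by rewrite Hm.
rewrite !mulrA e2 mulr_algl -scalerAl => ->.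
by rewrite -scalerAr mulrDl mulr_algl.
Qed.


Lemma spN (n j : nat) (x : 'I_n) : (j.+1 < n)%N ->
  nat_of_ord (sp n j x) = swapnat j (nat_of_ord x).
Proof. exact: spE. Qed.

Lemma mem_consO (n k : nat) (h : (k < n)%N) (c : 'I_n) s :
  (Ordinal h \in c :: s) = (nat_of_ord c == k) || (Ordinal h \in s).
Proof.
rewrite in_cons; congr orb; apply/eqP/eqP => [<-|e] //; exact: val_inj.
Qed.

Definition corrs (n : nat) (R : comUnitRingType) (t : R) (A : algType R)
    (XA : nat -> A) j (hj : (j.+1 < n)%N) (s : seq 'I_n) : A :=
  if (Ordinal (ltnW hj) \in s) && (Ordinal hj \notin s) then
    (1 - t) *: \prod_(c <- s) XA (nat_of_ord (sp n j c))
  else if (Ordinal hj \in s) && (Ordinal (ltnW hj) \notin s) then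
    - ((1 - t) *: \prod_(c <- s) XA (nat_of_ord c))
  else 0.

Lemma prod_fix (n : nat) (R : comUnitRingType) (A : algType R)
    (XA : nat -> A) j (hj : (j.+1 < n)%N) (s : seq 'I_n) :
  Ordinal (ltnW hj) \notin s -> Ordinal hj \notin s ->
  \prod_(c <- s) XA (nat_of_ord (sp n j c)) = \prod_(c <- s) XA (nat_of_ord c).
Proof.
move=> h0 h1; apply: eq_big_seq => c cs; rewrite spN // /swapnat.
case: eqP => [e|_]; first by move: h0; rewrite (_ : Ordinal _ = c) ?cs //; apply: val_inj.
case: eqP => [e|_] //; by move: h1; rewrite (_ : Ordinal _ = c) ?cs //; apply: val_inj.
Qed.

Lemma TXseq (n : nat) (R : comUnitRingType) (t : R) (A : algType R)
    (TA XA XAinv : nat -> A) j (hj : (j.+1 < n)%N) (s : seq 'I_n) :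
  t \is a GRing.unit -> hecke_rels n t TA XA XAinv -> sorted (@ltO n) s ->
  TA j * \prod_(c <- s) XA (nat_of_ord c) =
  \prod_(c <- s) XA (nat_of_ord (sp n j c)) * TA j + corrs t XA hj s.
Proof.
move=> tu H; have HH := H; move: HH => [_ [_ [_ [_ [_ [_ Hcomm]]]]]].
have ltO_tr : transitive (@ltO n) by move=> a b c; rewrite /ltO; apply: ltn_trans.
elim: s => [|c s IH] /= hs.
  by rewrite /corrs !big_nil mulr1 mul1r addr0.
have ss := path_sorted hs; have /allP cmin := order_path_min ltO_tr hs.
have notin k (hk : (k < n)%N) : (k <= nat_of_ord c)%N -> Ordinal hk \notin s.
  by move=> kc; apply/negP => /cmin; rewrite /ltO /= ltnNge => /negP; apply.
move: IH => /(_ ss); rewrite /corrs !big_cons !mem_consO => IH.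
case: (eqVneq (nat_of_ord c) j) => [cj|cj].
  have n0 := notin j (ltnW hj) (eq_leq (esym cj)).
  have -> : nat_of_ord (sp n j c) = j.+1 by rewrite spN // cj /swapnat eqxx.
  rewrite cj (negbTE n0) (ltn_eqF (ltnSn j)) /= mulrA (rel1 tu H hj) mulrDl -mulrA IH.
  rewrite (negbTE n0) /=.
  case: (boolP (Ordinal hj \in s)) => h1 /=.
    by rewrite mulrDr mulrN -scalerAr -scalerAl mulrA subrK addr0.
  rewrite mulrDr mulr0 addr0 mulrA -scalerAl.
  by rewrite prod_fix.
case: (eqVneq (nat_of_ord c) j.+1) => [cj1|cj1].
  have n0 : Ordinal (ltnW hj) \notin s by apply: (notin j (ltnW hj)); rewrite cj1.
  have n1 := notin j.+1 hj (eq_leq (esym cj1)).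
  have -> : nat_of_ord (sp n j c) = j by rewrite spN // cj1 /swapnat (gtn_eqF (ltnSn j)) eqxx.
  rewrite cj1 (negbTE n0) (negbTE n1) /=.
  rewrite mulrA (rel2 tu H hj) mulrBl -[XA j * TA j * _]mulrA IH (negbTE n0) (negbTE n1) /=.
  by rewrite addr0 prod_fix // mulrA -scalerAl.
have -> : nat_of_ord (sp n j c) = nat_of_ord c by rewrite spN // /swapnat (negbTE cj) (negbTE cj1).
rewrite /= mulrA Hcomm ?ltn_ord //.
rewrite -mulrA IH mulrDr mulrA; congr (_ + _).
case: (_ && _); first by rewrite scalerAr.
by case: (_ && _); rewrite ?mulr0 // mulrN scalerAr.
Qed.


Lemma prod_set (R : comUnitRingType) (A : algType R) (I: finType) (F : I -> A) (C : {set I}) :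
  \prod_(c in C) F c = \prod_(c <- enum C) F c.
Proof. by rewrite -big_filter deprecated_filter_index_enum. Qed.

Lemma prod_rem_comm (R : comUnitRingType) (A : algType R) (I : eqType) (F : I -> A)
   (s : seq I) a :
  (forall x y, F x * F y = F y * F x) -> a \in s ->
  \prod_(i <- s) F i = F a * \prod_(i <- rem a s) F i.
Proof.
move=> hc; elim: s => // b s IH; rewrite in_cons big_cons /= eq_sym.
case: (eqVneq b a) => [-> _ //|ne /= aS].
by rewrite big_cons IH // !mulrA hc.
Qed.

Lemma prod_perm_comm (R : comUnitRingType) (A : algType R) (I : eqType) (F : I -> A)
   (s1 s2 : seq I) :
  (forall x y, F x * F y = F y * F x) -> perm_eq s1 s2 ->
  \prod_(i <- s1) F i = \prod_(i <- s2) F i.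
Proof.
move=> hc; elim: s1 s2 => [|a s1 IH] s2 hp.
  by move: hp; rewrite perm_sym => /perm_nilP ->.
have as2 : a \in s2 by rewrite -(perm_mem hp) mem_head.
rewrite big_cons (prod_rem_comm hc as2) (IH (rem a s2)) //.
by rewrite -(perm_cons a) (perm_trans hp) // perm_to_rem.
Qed.

Lemma XC_sC (n : nat) (R : comUnitRingType) (t : R) (A : algType R)
    (TA XA XAinv : nat -> A) j (hj : (j.+1 < n)%N) (C : {set 'I_n}) :
  hecke_rels n t TA XA XAinv ->
  XC XA (sC j C) = \prod_(c <- enum C) XA (nat_of_ord (sp n j c)).
Proof.
move=> [_ [_ [_ [Hx _]]]].
rewrite /Defs.XC prod_set -(big_map (sp n j) xpredT (fun c : 'I_n => XA c)).
apply: prod_perm_comm; first by move=> x y; rewrite Hx.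
apply: uniq_perm; first exact: enum_uniq.
  rewrite map_inj_uniq ?enum_uniq //; exact: perm_inj.
move=> x; rewrite mem_enum mem_sC // -{2}(sp_inv hj x) mem_map ?mem_enum //.
exact: perm_inj.
Qed.

Definition corrC (n : nat) (R : comUnitRingType) (t : R) (A : algType R)
    (XA : nat -> A) j (hj : (j.+1 < n)%N) (C : {set 'I_n}) : A :=
  if (Ordinal (ltnW hj) \in C) && (Ordinal hj \notin C) then
    (1 - t) *: XC XA (sC j C)
  else if (Ordinal hj \in C) && (Ordinal (ltnW hj) \notin C) then
    - ((1 - t) *: XC XA C)
  else 0.

Lemma TXC (n : nat) (R : comUnitRingType) (t : R) (A : algType R)
    (TA XA XAinv : nat -> A) j (hj : (j.+1 < n)%N) (C : {set 'I_n}) :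
  t \is a GRing.unit -> hecke_rels n t TA XA XAinv ->
  TA j * XC XA C = XC XA (sC j C) * TA j + corrC t XA hj C.
Proof.
move=> tu H.
have e : XC XA C = \prod_(c <- enum C) XA c by rewrite /Defs.XC prod_set.
rewrite /corrC !(XC_sC hj C H) e (TXseq hj tu H (sorted_enumO C)).
by rewrite /corrs !mem_enum.
Qed.


Lemma sp_oj (n j : nat) (hj : (j.+1 < n)%N) : sp n j (Ordinal (ltnW hj)) = Ordinal hj.
Proof. by apply: val_inj; rewrite spE //= /swapnat eqxx. Qed.

Lemma sp_oj1 (n j : nat) (hj : (j.+1 < n)%N) : sp n j (Ordinal hj) = Ordinal (ltnW hj).
Proof. by apply: val_inj; rewrite spE //= /swapnat eqxx gtn_eqF. Qed.

Lemma pQ_sC (n j : nat) (hj : (j.+1 < n)%N) (C : {set 'I_n}) :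
  (Ordinal hj \in sC j C) && (Ordinal (ltnW hj) \notin sC j C) =
  (Ordinal (ltnW hj) \in C) && (Ordinal hj \notin C).
Proof. by rewrite !mem_sC // sp_oj sp_oj1. Qed.

Lemma sum_inv (n : nat) (R : comUnitRingType) (A : algType R) j (hj : (j.+1 < n)%N) l
   (F : {set 'I_n} -> A) :
  \sum_(C : {set 'I_n} | #|C| == l) F C = \sum_(C : {set 'I_n} | #|C| == l) F (sC j C).
Proof.
rewrite (reindex_inj (can_inj (sC_inv hj))) /=.
by apply: eq_bigl => C; rewrite card_sC.
Qed.

Lemma gform (n : nat) (R : comUnitRingType) (t : R) (A : algType R)
    (TA : nat -> A) j (hj : (j.+1 < n)%N) (D : {set 'I_n}) K :
  gDK t TA j D K = TA j * phiA TA (Psi t (sC j D :: K)) +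
    (if (Ordinal hj \in D) && (Ordinal (ltnW hj) \notin D) then
       (1 - t) *: (phiA TA (Psi t (sC j D :: K)) - phiA TA (Psi t (D :: K))) else 0).
Proof.
rewrite /gDK leC_sC.
case: (boolP ((Ordinal (ltnW hj) \in D) && (Ordinal hj \notin D))) => hP /=.
  move: hP => /andP [-> /negbTE ->]; by rewrite addr0.
rewrite mulrDl mulr_algl.
case: (boolP ((Ordinal hj \in D) && (Ordinal (ltnW hj) \notin D))) => hQ.
  by rewrite scalerBr addrA.
have e : (Ordinal (ltnW hj) \in D) = (Ordinal hj \in D).
  by move: hP hQ; case: (_ \in D); case: (_ \in D).
by rewrite (sC_fix e) addrK addr0.
Qed.

Lemma fg (n : nat) (R : comUnitRingType) (t : R) (A : algType R)
    (TA : nat -> A) j (D : {set 'I_n}) K :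
  fDK t TA j D K = gDK t TA j D K + (1 - t) *: phiA TA (Psi t (D :: K)).
Proof. by rewrite /fDK /gDK; case: leC; rewrite ?subrK. Qed.


Lemma g_abs (n : nat) (R : comUnitRingType) (t : R) (A : algType R)
    (TA XA XAinv : nat -> A) (l j : nat) (hj : (j.+1 < n)%N) (P G : {set 'I_n} -> A) :
  t \is a GRing.unit -> hecke_rels n t TA XA XAinv ->
  (forall D, G D = TA j * P (sC j D) +
    (if (Ordinal hj \in D) && (Ordinal (ltnW hj) \notin D) then
       (1 - t) *: (P (sC j D) - P D) else 0)) ->
  TA j * (\sum_(C : {set 'I_n} | #|C| == l) XC XA C * P C)
    = \sum_(D : {set 'I_n} | #|D| == l) XC XA D * G D.
Proof.
move=> tu H HG.
pose pP := fun C : {set 'I_n} => (Ordinal (ltnW hj) \in C) && (Ordinal hj \notin C).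
pose pQ := fun C : {set 'I_n} => (Ordinal hj \in C) && (Ordinal (ltnW hj) \notin C).
pose L1 C := XC XA (sC j C) * (TA j * P C) + (if pP C then (1 - t) *: (XC XA (sC j C) * P C) else 0).
pose L2 C := if pQ C then - ((1 - t) *: (XC XA C * P C)) else 0.
pose R1 C := XC XA C * (TA j * P (sC j C)) + (if pQ C then (1 - t) *: (XC XA C * P (sC j C)) else 0).
rewrite mulr_sumr.
rewrite (eq_bigr (fun C => L1 C + L2 C)); last first.
  move=> C _; rewrite mulrA (TXC hj C tu H) mulrDl -mulrA /L1 /L2 /corrC -/(pP C) -/(pQ C) -addrA.
  congr (_ + _); case: (boolP (pP C)) => hP.
    have -> : pQ C = false by move: hP; rewrite /pP /pQ; case: (_ \in C); case: (_ \in C).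
    by rewrite addr0 -scalerAl.
  by rewrite add0r; case: (pQ C); rewrite ?mul0r // mulNr -scalerAl.
rewrite [RHS](eq_bigr (fun C => R1 C + L2 C)); last first.
  move=> C _; rewrite HG mulrDr /R1 /L2 -/(pQ C) -addrA; congr (_ + _).
  case: (pQ C); last by rewrite mulr0 addr0.
  by rewrite -scalerAr mulrBr scalerBr.
have E : \sum_(C : {set 'I_n} | #|C| == l) L1 C = \sum_(C : {set 'I_n} | #|C| == l) R1 C.
  rewrite (sum_inv hj l R1); apply: eq_bigr => C _.
  by rewrite /R1 /L1 (sC_inv hj) /pQ /pP pQ_sC.
transitivity (\sum_(C : {set 'I_n} | #|C| == l) L1 C + \sum_(C : {set 'I_n} | #|C| == l) L2 C).
  by rewrite big_split.
by rewrite E (big_split _ _ _ R1 L2).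
Qed.


Unset Implicit Arguments. Set Strict Implicit.

Theorem lemma6p4 (n : nat) (R : comUnitRingType) (t : R) (A : algType R)
    (TA XA XAinv : nat -> A) (K : seq {set 'I_n}) (l j : nat) :
  t \is a GRing.unit ->
  hecke_rels n t TA XA XAinv ->
  K != [::] ->
  sorted (fun a b : nat => (b <= a)%N) (map (fun C : {set 'I_n} => #|C|) K) ->
  all (fun C : {set 'I_n} => (0 < #|C|)%N) K ->
  (0 < l <= n)%N ->
  (#|head set0 K| <= l)%N ->
  (0 < j.+1 < n)%N ->
  (TA j + (1 - t)%:A) *
      (\sum_(C : {set 'I_n} | #|C| == l) XC XA C * phiA TA (Psi t (C :: K)))
    = \sum_(D : {set 'I_n} | #|D| == l) XC XA D * fDK t TA j D K
  /\
  TA j * (\sum_(C : {set 'I_n} | #|C| == l) XC XA C * phiA TA (Psi t (C :: K)))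
    = \sum_(D : {set 'I_n} | #|D| == l) XC XA D * gDK t TA j D K.
Proof.
move=> tu H _ _ _ _ _ /andP [_ hj].
have G2 : TA j * (\sum_(C : {set 'I_n} | #|C| == l) XC XA C * phiA TA (Psi t (C :: K)))
    = \sum_(D : {set 'I_n} | #|D| == l) XC XA D * gDK t TA j D K.
  exact: (@g_abs n R t A TA XA XAinv l j hj (fun C => phiA TA (Psi t (C :: K)))
           (fun D => gDK t TA j D K) tu H (fun D => @gform n R t A TA j hj D K)).
split; last exact: G2.
rewrite mulrDl mulr_algl G2 scaler_sumr -big_split.
apply: eq_bigr => D _.
by rewrite fg mulrDr scalerAr.
Qed.
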